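(* Let $p_{XYZ}$ be the distribution in which $X$ and $Y$ are independent uniformly distributed bits and $Z=X\wedge Y$. There exists a correlated multi-secret sharing scheme for $p_{XYZ}$ with $H(M_{12})=H(M_{23})=H(M_{31})=\log 3$.
   Context: A correlated multi-secret sharing (CMSS) scheme for a joint distribution $p_{XYZ}$ on finite sets is a conditional distribution $p_{M_{12}M_{23}M_{31}|XYZ}$ mapping secrets $(X,Y,Z)\sim p_{XYZ}$ probabilistically to shares $(M_{12},M_{23},M_{31})$ such that (correctness) $H(X|M_{12},M_{31})=H(Y|M_{12},M_{23})=H(Z|M_{23},M_{31})=0$ and (privacy) $I((M_{12},M_{31});(Y,Z)|X)=0$, $I((M_{12},M_{23});(X,Z)|Y)=0$, $I((M_{23},M_{31});(X,Y)|Z)=0$. Logs base 2. *)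

(* Defs.v *)
From mathcomp Require Import all_boot all_order all_algebra.
From mathcomp Require Import reals exp.
Set Implicit Arguments. Unset Strict Implicit. Unset Printing Implicit Defensive.
Import Order.TTheory GRing.Theory Num.Theory.
Local Open Scope ring_scope.

Section InfoTheory.
Variable R : realType.

Definition log2 (x : R) : R := ln x / ln 2.

Definition is_pmf (T : finType) (P : T -> R) : Prop :=
  (forall t, 0 <= P t) /\ \sum_(t : T) P t = 1.

Definition law (T A : finType) (P : T -> R) (f : T -> A) (a : A) : R :=
  \sum_(t : T | f t == a) P t.

Definition entropy (T A : finType) (P : T -> R) (f : T -> A) : R :=
  - \sum_(a : A) (if law P f a == 0 then 0 else law P f a * log2 (law P f a)).

Definition pairRV (T A B : finType) (f : T -> A) (g : T -> B) : T -> A * B :=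
  fun t => (f t, g t).

Definition cond_entropy (T A B : finType) (P : T -> R) (f : T -> A) (g : T -> B) : R :=
  entropy P (pairRV f g) - entropy P g.

Definition cond_mutinfo (T A B C : finType) (P : T -> R)
    (f : T -> A) (g : T -> B) (h : T -> C) : R :=
  cond_entropy P f h - cond_entropy P f (pairRV g h).

End InfoTheory.

(* Secrets (X,Y,Z) in SX*SY*SZ, shares
   (M12,M23,M31) in M1*M2*M3.  The underlying probability space is
   (SX*SY*SZ) * (M1*M2*M3) with mass  p(x,y,z) * q((m12,m23,m31) | (x,y,z)). *)
Section CMSS.
Variables (R : realType) (SX SY SZ M1 M2 M3 : finType).
Notation Sec := (prod (prod SX SY) SZ).
Notation Sh := (prod (prod M1 M2) M3).
Notation Om := (prod Sec Sh).

Definition joint (p : Sec -> R) (q : Sec -> Sh -> R) : Om -> R :=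
  fun w => p w.1 * q w.1 w.2.

Definition rvX (w : Om) : SX := w.1.1.1.
Definition rvY (w : Om) : SY := w.1.1.2.
Definition rvZ (w : Om) : SZ := w.1.2.
Definition rvM12 (w : Om) : M1 := w.2.1.1.
Definition rvM23 (w : Om) : M2 := w.2.1.2.
Definition rvM31 (w : Om) : M3 := w.2.2.

Definition is_cond_distr (q : Sec -> Sh -> R) : Prop :=
  forall s, is_pmf (q s).

Definition is_CMSS (p : Sec -> R) (q : Sec -> Sh -> R) : Prop :=
  let P := joint p q in
  is_cond_distr q /\
  cond_entropy P rvX (pairRV rvM12 rvM31) = 0 /\
  cond_entropy P rvY (pairRV rvM12 rvM23) = 0 /\
  cond_entropy P rvZ (pairRV rvM23 rvM31) = 0 /\
  cond_mutinfo P (pairRV rvM12 rvM31) (pairRV rvY rvZ) rvX = 0 /\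
  cond_mutinfo P (pairRV rvM12 rvM23) (pairRV rvX rvZ) rvY = 0 /\
  cond_mutinfo P (pairRV rvM23 rvM31) (pairRV rvX rvY) rvZ = 0.

End CMSS.

Definition p_AND (R : realType) (s : bool * bool * bool) : R :=
  if s.2 == s.1.1 && s.1.2 then 4^-1 else 0.

(* Main.v *)
Require Import Defs.
From mathcomp Require Import all_boot all_order all_algebra.
From mathcomp Require Import reals exp.
From mathcomp Require Import ring lra.
Set Implicit Arguments. Unset Strict Implicit. Unset Printing Implicit Defensive.
Import Order.TTheory GRing.Theory Num.Theory.
Local Open Scope ring_scope.

Notation S3 := (option bool).
Notation Sh3 := ((S3 * S3 * S3)%type).
Notation Om := ((bool * bool * bool) * (S3 * S3 * S3))%type.

Definition pr (x y : bool) (m : Sh3) : bool :=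
  ((m.1.1 == m.2) == x) && ((m.1.1 == m.1.2) == y) && [|| x, y | m.1.2 != m.2].
Definition kq (x y : bool) (m : Sh3) : nat :=
  if pr x y m then (if x && y then 2 else 1)%N else 0%N.
Definition kO (w : Om) : nat :=
  if w.1.2 == w.1.1.1 && w.1.1.2 then kq w.1.1.1 w.1.1.2 w.2 else 0%N.

Definition EB : seq bool := [:: true; false].
Definition E3 : seq S3 := [:: None; Some true; Some false].
Definition EP (A B : eqType) (ea : seq A) (eb : seq B) : seq (A * B) :=
  [seq (a, b) | a <- ea, b <- eb].
Definition full (T : finType) (e : seq T) := uniq e /\ forall t, t \in e.

Lemma fullB : full EB. Proof. by split => // -[]. Qed.
Lemma full3 : full E3. Proof. by split => // -[[]|]. Qed.
Lemma fullP (A B : finType) (ea : seq A) (eb : seq B) :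
  full ea -> full eb -> full (EP ea eb).
Proof.
move=> [ua fa] [ub fb]; split.
  by apply: allpairs_uniq => // -[? ?] [? ?].
by move=> [a b]; apply: (allpairs_f (fun a b => (a, b))).
Qed.

Definition EO : seq Om := EP (EP (EP EB EB) EB) (EP (EP E3 E3) E3).
Lemma fullO : full EO.
Proof. by repeat apply: fullP; (apply: fullB || apply: full3). Qed.

Lemma sumE (T : finType) (e : seq T) (R' : Type) (idx : R')
   (op : Monoid.com_law idx) (P : pred T) (F : T -> R') :
  full e -> \big[op/idx]_(t | P t) F t = \big[op/idx]_(t <- e | P t) F t.
Proof.
move=> [ue fe]; apply: perm_big; apply: uniq_perm => //.
  exact: index_enum_uniq.
by move=> t; rewrite mem_index_enum fe.
Qed.

Lemma sum_sumn (T : Type) (e : seq T) (F : T -> nat) :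
  (\sum_(t <- e) F t)%N = sumn (map F e).
Proof. by rewrite sumnE big_map. Qed.

Definition Ncnt (A : eqType) (f : Om -> A) (a : A) : nat :=
  sumn (map kO (filter (fun t => f t == a) EO)).

Section Main.
Variable R : realType.

Definition qd (s : bool * bool * bool) (m : Sh3) : R := (kq s.1.1 s.1.2 m)%:R / 6.

Definition G (n : nat) : R := if n == 0%N then 0 else n%:R / 24 * log2 (n%:R / 24).

Lemma jointE (t : Om) : joint (@p_AND R) qd t = (kO t)%:R / 24.
Proof.
case: t => [[[x y] z] m]; rewrite /joint /p_AND /qd /kO /=.
case: ifP => _; last by rewrite !mul0r.
by field; rewrite ?pnatr_eq0.
Qed.

Lemma entropyL (A : finType) (f : Om -> A) (ea : seq A) (L : seq nat) :
  full ea -> perm_eq [seq n <- map (Ncnt f) ea | n != 0%N] L ->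
  entropy (joint (@p_AND R) qd) f = - \sum_(n <- L) G n.
Proof.
move=> fea pL; rewrite /entropy; congr (- _).
rewrite -(perm_big _ pL) big_filter /= big_map.
rewrite (sumE _ _ _ fea).
rewrite [RHS]big_mkcond /=.
apply: eq_bigr => a _.
have -> : law (joint (@p_AND R) qd) f a = (Ncnt f a)%:R / 24.
  rewrite /law (eq_bigr (fun t => (kO t)%:R / 24)); last by move=> t _; exact: jointE.
  rewrite -mulr_suml -natr_sum (sumE _ _ _ fullO).
  by rewrite /Ncnt -big_filter sum_sumn.
rewrite /G; have [->|n0] := eqVneq (Ncnt f a) 0%N; first by rewrite /= mul0r eqxx.
by rewrite /= mulf_eq0 invr_eq0 !pnatr_eq0 (negbTE n0) /=.
Qed.

Lemma ln2_gt0 : 0 < ln (2 : R).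
Proof. by apply: ln_gt0; rewrite ltr1n. Qed.

Lemma log2M (x y : R) : 0 < x -> 0 < y -> log2 (x * y) = log2 x + log2 y.
Proof. by move=> x0 y0; rewrite /log2 lnM ?posrE // mulrDl. Qed.

Lemma log2V (x : R) : 0 < x -> log2 x^-1 = - log2 x.
Proof. by move=> x0; rewrite /log2 lnV ?posrE // mulNr. Qed.

Lemma log2_2 : log2 (2%:R : R) = 1.
Proof. by rewrite /log2 divff // gt_eqF // ln2_gt0. Qed.

Lemma log2_1 : log2 (1%:R : R) = 0.
Proof. by rewrite /log2 ln1 mul0r. Qed.

Lemma log2Mn (m n : nat) : (0 < m)%N -> (0 < n)%N ->
  log2 ((m * n)%N%:R : R) = log2 m%:R + log2 n%:R.
Proof. by move=> m0 n0; rewrite natrM log2M ?ltr0n. Qed.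

Lemma log2_4 : log2 (4%:R : R) = 2.
Proof. by rewrite (@log2Mn 2 2) // log2_2. Qed.
Lemma log2_8 : log2 (8%:R : R) = 3.
Proof. by rewrite (@log2Mn 2 4) // log2_2 log2_4. Qed.
Lemma log2_6 : log2 (6%:R : R) = 1 + log2 3%:R.
Proof. by rewrite (@log2Mn 2 3) // log2_2. Qed.
Lemma log2_12 : log2 (12%:R : R) = 2 + log2 3%:R.
Proof. by rewrite (@log2Mn 4 3) // log2_4. Qed.
Lemma log2_18 : log2 (18%:R : R) = 1 + 2 * log2 3%:R.
Proof. by rewrite (@log2Mn 2 9) // (@log2Mn 3 3) // log2_2 mulr2n mulrDl mul1r. Qed.
Lemma log2_24 : log2 (24%:R : R) = 3 + log2 3%:R.
Proof. by rewrite (@log2Mn 8 3) // log2_8. Qed.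

Lemma Gv n : G n.+1 = n.+1%:R / 24 * (log2 n.+1%:R - log2 24%:R).
Proof.
by rewrite /G /= log2M ?log2V ?invr_gt0 ?ltr0n.
Qed.

Lemma sum_nseq (m a : nat) (F : nat -> R) : \sum_(i <- nseq m a) F i = F a *+ m.
Proof. by elim: m => [|m IH]; rewrite ?big_nil // big_cons IH mulrS. Qed.

Lemma sum_cat (s1 s2 : seq nat) (F : nat -> R) :
  \sum_(i <- s1 ++ s2) F i = \sum_(i <- s1) F i + \sum_(i <- s2) F i.
Proof. exact: big_cat. Qed.

End Main.

Ltac solve_full := repeat apply: fullP; (apply: fullB || apply: full3).
Ltac ent ea L := rewrite (@entropyL _ _ _ ea L);
  [ | match goal with |- full _ => solve_full end
    | match goal with |- is_true (perm_eq _ _) => by vm_compute end ].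
Ltac fin := rewrite ?sum_cat !sum_nseq !Gv ?log2_1 ?log2_2 ?log2_4 ?log2_6 ?log2_8 ?log2_12 ?log2_18 ?log2_24;
  by field; rewrite ?pnatr_eq0.

Definition ES := EP (EP E3 E3) E3.

Lemma qd_distr (R : realType) : is_cond_distr (@qd R).
Proof.
move=> s; split=> [m|]; first by rewrite /qd divr_ge0 ?ler0n.
rewrite /qd -mulr_suml -natr_sum (@sumE _ ES); last by solve_full.
rewrite sum_sumn (_ : sumn _ = 6%N); last by case: s => [[[] []] ?]; vm_compute.
by rewrite divff // pnatr_eq0.
Qed.

Definition E2 := EP E3 E3.
Definition EW := EP (EP EB EB) EB.

Theorem theorem12 (R : realType) :
  exists (M1 M2 M3 : finType)
         (q : bool * bool * bool -> M1 * M2 * M3 -> R),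
    is_CMSS (@p_AND R) q /\
    entropy (joint (@p_AND R) q) (@rvM12 bool bool bool M1 M2 M3) = log2 3 /\
    entropy (joint (@p_AND R) q) (@rvM23 bool bool bool M1 M2 M3) = log2 3 /\
    entropy (joint (@p_AND R) q) (@rvM31 bool bool bool M1 M2 M3) = log2 3.
Proof.
exists S3, S3, S3, (@qd R).
split; last first.
  split; [|split]; ent E3 (nseq 3 8)%N; fin.
split; first exact: qd_distr.
rewrite /cond_mutinfo /cond_entropy.
split; first by ent (EP EB E2) (nseq 6 2 ++ nseq 3 4)%N; ent E2 (nseq 6 2 ++ nseq 3 4)%N; rewrite subrr.
split; first by ent (EP EB E2) (nseq 6 2 ++ nseq 3 4)%N; ent E2 (nseq 6 2 ++ nseq 3 4)%N; rewrite subrr.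
split; first by ent (EP EB E2) (nseq 3 2 ++ nseq 6 3)%N; ent E2 (nseq 3 2 ++ nseq 6 3)%N; rewrite subrr.
split.
  ent (EP E2 EB) (nseq 6 2 ++ nseq 3 4)%N; ent EB (nseq 2 12)%N;
  ent (EP E2 EW) (nseq 12 1 ++ nseq 6 2)%N; ent EW (nseq 4 6)%N; fin.
split.
  ent (EP E2 EB) (nseq 6 2 ++ nseq 3 4)%N; ent EB (nseq 2 12)%N;
  ent (EP E2 EW) (nseq 12 1 ++ nseq 6 2)%N; ent EW (nseq 4 6)%N; fin.
ent (EP E2 EB) (nseq 3 2 ++ nseq 6 3)%N; ent EB (nseq 1 6 ++ nseq 1 18)%N;
ent (EP E2 EW) (nseq 18 1 ++ nseq 3 2)%N; ent EW (nseq 4 6)%N; fin.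
Qed.
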